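(* Fix weights $w_1,\dots,w_D>0$ and let $\mu_{n,N,w}$ be the Boltzmann probability measure on perfect matchings $\tau$ of the $N$-fold blow-up $\mathbb T(n,\Lambda)_N$, with $\mu_{n,N,w}(\tau)\propto\prod_{e\in\tau}w(e)$, where every lift of an edge of type $e_i$ has weight $w_i$. Let $H(\mu_{n,N,w})=-\sum_\tau\mu_{n,N,w}(\tau)\log\mu_{n,N,w}(\tau)$ be its Shannon entropy. Then $$\lim_{n\to\infty}\lim_{N\to\infty}\frac{1}{Nn^d}\Big[H(\mu_{n,N,w})-n^d\log N!\Big]=\log(w_1+\dots+w_D)-\frac{1}{w_1+\dots+w_D}\sum_{i=1}^D w_i\log w_i .$$
   Context: $\Lambda$ is a bipartite graph embedded in $\mathbb R^d$ of the following form (or a linear image of one): there are vectors $e_1,\dots,e_D\in\mathbb R^d$ spanning $\mathbb R^d$ with $\sum_{i=1}^D e_i=0$ and a vector $v_0$ with $e_i\in v_0+\mathbb Z^d$ for all $i$; the white vertices are $W=\mathbb Z^d$, the black vertices are $B=\mathbb Z^d+v_0$, and each white vertex $w$ is joined by an edge exactly to the black vertices $w+e_1,\dots,w+e_D$; $\Lambda$ is connected. An edge from $w$ to $w+e_i$ is said to be of type $e_i$. The torus $\mathbb T(n,\Lambda)=\Lambda/n\mathbb Z^d$ has $n^d$ white and $n^d$ black vertices. The $N$-fold blow-up $G_N$ of a graph $G$ replaces every vertex by $N$ copies (lifts) and every edge $(u,v)$ by the complete bipartite graph between the lifts of $u$ and the lifts of $v$. *)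

(* Defs.v *)
From HB Require Import structures.
From mathcomp Require Import all_boot all_order all_algebra.
From mathcomp Require Import all_classical all_reals all_analysis.
Set Implicit Arguments. Unset Strict Implicit. Unset Printing Implicit Defensive.
Import Order.TTheory GRing.Theory Num.Theory.
Local Open Scope ring_scope.

(* The graph Lambda is encoded by: d, D, v0 : R^d, and integer vectors
   f i = e_i - v0 in Z^d, so that e_i = v0 + f i.
   White vertices are Z^d; a black vertex b in Z^d + v0 is represented by
   b - v0 in Z^d.  White w is joined to black w + e_i, represented by w + f i. *)

Section Lattice.
Variables (R : realType) (d D : nat).

Definition evec (v0 : 'I_d -> R) (f : 'I_D -> 'I_d -> int) (i : 'I_D) (k : 'I_d) : R :=
  v0 k + (f i k)%:~R.

Definition spans_Rd (e : 'I_D -> 'I_d -> R) : Prop :=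
  forall x : 'I_d -> R, exists c : 'I_D -> R,
    forall k, x k = \sum_(i < D) c i * e i k.

Definition sum_zero (e : 'I_D -> 'I_d -> R) : Prop :=
  forall k, \sum_(i < D) e i k = 0.

End Lattice.

(* Vertices of the infinite graph Lambda: (true, x) = white vertex x in Z^d,
   (false, y) = black vertex y + v0. *)
Definition LVert (d : nat) := (bool * {ffun 'I_d -> int})%type.

Definition Ladj (d D : nat) (f : 'I_D -> 'I_d -> int) (u v : LVert d) : Prop :=
  exists i : 'I_D,
    (u.1 = true /\ v.1 = false /\ forall k, v.2 k = u.2 k + f i k) \/
    (v.1 = true /\ u.1 = false /\ forall k, u.2 k = v.2 k + f i k).

Inductive Lreach (d D : nat) (f : 'I_D -> 'I_d -> int) : LVert d -> LVert d -> Prop :=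
  | Lreach_refl u : Lreach f u u
  | Lreach_step u v x : Ladj f u v -> Lreach f v x -> Lreach f u x.

Definition Lconnected (d D : nat) (f : 'I_D -> 'I_d -> int) : Prop :=
  forall u v : LVert d, Lreach f u v.

(* Torus T(m.+1, Lambda) = Lambda / (m.+1) Z^d.  Both white and black vertices
   are indexed by (Z/(m+1)Z)^d. *)
Definition TVert (d m : nat) := {ffun 'I_d -> 'I_m.+1}.

Definition tshift (d D m : nat) (f : 'I_D -> 'I_d -> int) (i : 'I_D) (x : TVert d m)
  : TVert d m := [ffun k => x k + Zp1 *~ f i k].

(* A lift is (vertex, copy index in 'I_N).
   An edge of the blow-up is a white lift a, an edge type i and a black lift
   (tshift i a.1, l').  A perfect matching assigns to every white lift a an
   incident edge (type, black copy), such that every black lift is covered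
   exactly once. *)
Definition Matching (d D m N : nat) :=
  {ffun (TVert d m * 'I_N) -> ('I_D * 'I_N)}.

Definition black_end (d D m N : nat) (f : 'I_D -> 'I_d -> int)
  (M : Matching d D m N) (a : TVert d m * 'I_N) : TVert d m * 'I_N :=
  (tshift f (M a).1 a.1, (M a).2).

Definition perfect (d D m N : nat) (f : 'I_D -> 'I_d -> int) (M : Matching d D m N) : bool :=
  [forall b : TVert d m * 'I_N, #|[set a | black_end f M a == b]| == 1%N].

Section Boltzmann.
Variables (R : realType) (d D : nat) (f : 'I_D -> 'I_d -> int) (w : 'I_D -> R).

Definition mweight (m N : nat) (M : Matching d D m N) : R :=
  \prod_(a : TVert d m * 'I_N) w (M a).1.

Definition partition_fn (m N : nat) : R :=
  \sum_(M : Matching d D m N | perfect f M) mweight M.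

Definition boltzmann (m N : nat) (M : Matching d D m N) : R :=
  mweight M / partition_fn m N.

Definition entropy (m N : nat) : R :=
  - \sum_(M : Matching d D m N | perfect f M)
      boltzmann M * ln (boltzmann M).

Definition normalized_entropy (m N : nat) : R :=
  (entropy m N - ((m.+1) ^ d)%:R * ln (N`!)%:R) / (N * (m.+1) ^ d)%:R.

End Boltzmann.

(* Main.v *)
Require Import Defs.
From HB Require Import structures.
From mathcomp Require Import all_boot all_order all_algebra all_fingroup.
From mathcomp Require Import all_classical all_reals all_analysis.
Import Order.TTheory GRing.Theory Num.Theory.
Import numFieldNormedType.Exports.
From mathcomp Require Import ring lra.
Local Open Scope ring_scope.
Section Comb.
Variables (d D m N : nat) (f : 'I_D -> 'I_d -> int).
Local Notation L := (TVert d m * 'I_N)%type.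
Local Notation MT := (Matching d D m N).
Local Notation be := (black_end f).

Lemma perfect_inj (M : MT) : perfect f M -> injective (be M).
Proof.
move=> /forallP H a a' E.
have /cards1P [x Hx] := H (be M a).
have : a \in [set a0 | be M a0 == be M a] by rewrite inE.
have : a' \in [set a0 | be M a0 == be M a] by rewrite inE E.
by rewrite Hx !inE => /eqP -> /eqP ->.
Qed.

Arguments perfect_inj {M}.

Lemma inj_perfect (M : MT) : injective (be M) -> perfect f M.
Proof.
move=> /injF_bij [g K1 K2]; apply/forallP => b; apply/cards1P; exists (g b).
apply/setP => a; rewrite !inE; apply/eqP/eqP => [<-|->]; first by rewrite K1.
by rewrite K2.
Qed.

Definition tp (M : MT) : {ffun L -> 'I_D} := [ffun a => (M a).1].

Definition act (M0 : MT) (pi : {ffun TVert d m -> {perm 'I_N}}) : MT :=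
  [ffun a => ((M0 a).1, pi (tshift f (M0 a).1 a.1) (M0 a).2)].

Lemma act_tp M0 pi : tp (act M0 pi) = tp M0.
Proof. by apply/ffunP => a; rewrite !ffunE. Qed.

Lemma be_act M0 pi a : be (act M0 pi) a = ((be M0 a).1, pi (be M0 a).1 (be M0 a).2).
Proof. by rewrite /black_end ffunE. Qed.

Lemma act_perfect M0 pi : perfect f M0 -> perfect f (act M0 pi).
Proof.
move=> /perfect_inj H; apply: inj_perfect => a a'.
rewrite !be_act => E; apply: H; move: E.
case: (be M0 a) => y k; case: (be M0 a') => y' k' /= [E1].
by subst => /perm_inj ->.
Qed.

Lemma act_inj M0 : perfect f M0 -> injective (act M0).
Proof.
move=> /perfect_inj /injF_bij [g K1 K2] pi pi' E.
apply/ffunP => y; apply/permP => k.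
have := congr1 (fun M => be M (g (y, k))) E.
by rewrite !be_act K2 /= => -[].
Qed.

Lemma act_onto M0 M : perfect f M0 -> perfect f M -> tp M = tp M0 ->
  exists pi, M = act M0 pi.
Proof.
move=> P0 P E.
have [g K1 K2] := injF_bij (perfect_inj P0).
have Et a : (M a).1 = (M0 a).1.
  by have := congr1 (fun T : {ffun L -> 'I_D} => T a) E; rewrite !ffunE.
have inj y : injective (fun k : 'I_N => (M (g (y, k))).2).
  move=> k k' Ek.
  have H1 : be M (g (y, k)) = be M (g (y, k')).
    rewrite /black_end Ek !Et.
    have := K2 (y, k); have := K2 (y, k'); rewrite /black_end.
    by case=> -> _; case=> -> _.
  have := congr1 (be M0) (perfect_inj P _ _ H1); rewrite !K2; by case.
exists [ffun y => perm (inj y)]; apply/ffunP => a.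
rewrite ffunE ffunE permE.
have -> : (tshift f (M0 a).1 a.1, (M0 a).2) = be M0 a by [].
by rewrite K1 -Et; case: (M a).
Qed.

Arguments act_onto {M0 M}.
Arguments act_inj {M0}.
Arguments act_perfect {M0}.

Lemma count_le (T : {ffun L -> 'I_D}) :
  (#|[set M : MT | perfect f M & tp M == T]| <= N`! ^ #|TVert d m|)%N.
Proof.
case: (set_0Vmem [set M : MT | perfect f M & tp M == T]) => [-> | [M0]].
  by rewrite cards0.
rewrite inE => /andP [P0 /eqP T0].
rewrite -card_Sn -card_ffun.
apply: (leq_trans (subset_leq_card (_ : _ \subset [set act M0 pi | pi in finset.setT]))).
  apply/fintype.subsetP => M; rewrite inE => /andP [P /eqP TM].
  have [pi ->] := act_onto P0 P (etrans TM (esym T0)).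
  by apply: imset_f; rewrite inE.
by apply: (leq_trans (leq_imset_card _ _)); rewrite cardsT.
Qed.

Definition admissible (T : {ffun L -> 'I_D}) :=
  forall y, #|[set a : L | tshift f (T a) a.1 == y]| = N.

Lemma count_ge (T : {ffun L -> 'I_D}) : admissible T ->
  (N`! ^ #|TVert d m| <= #|[set M : MT | perfect f M & tp M == T]|)%N.
Proof.
move=> adm.
pose S (a : L) := enum [set a' : L | tshift f (T a') a'.1 == tshift f (T a) a.1].
pose M0 : MT := [ffun a => (T a, insubd a.2 (index a (S a)))].
have tp0 : tp M0 = T by apply/ffunP => a; rewrite !ffunE.
have memS a : a \in S a by rewrite mem_enum inE.
have lt a : (index a (S a) < N)%N.
  by move: (memS a); rewrite -index_mem /S -cardE adm.
have P0 : perfect f M0.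
  apply: inj_perfect => a a'; rewrite /black_end !ffunE /= => -[E1 E2].
  have := congr1 val E2; rewrite !val_insubd !lt => E.
  have ES : S a = S a' by rewrite /S E1.
  by rewrite -(nth_index a (memS a)) E ES nth_index.
rewrite -card_Sn -card_ffun -cardsT -(card_imset _ (act_inj P0)).
apply: subset_leq_card; apply/fintype.subsetP => M /imsetP [pi _ ->].
by rewrite inE act_perfect //= act_tp tp0.
Qed.

End Comb.

Section Adm.
Variables (d D m N : nat) (f : 'I_D -> 'I_d -> int).
Local Notation L := (TVert d m * 'I_N)%type.

Lemma card_predE (T : finType) (P : pred T) : #|[set x | P x]| = (\sum_x (P x : nat))%N.
Proof.
rewrite -sum1_card big_mkcond; apply: eq_bigr => x _; rewrite inE; by case: (P x).
Qed.

Lemma tshift_one i (y : TVert d m) : (\sum_(x : TVert d m) (tshift f i x == y : nat))%N = 1%N.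
Proof.
pose x0 : TVert d m := [ffun k => y k - Zp1 *~ f i k].
have E0 : tshift f i x0 = y.
  by apply/ffunP => k; rewrite !ffunE subrK.
rewrite (bigD1 x0) //= E0 eqxx big1 // => x nx.
apply/eqP; rewrite eqb0; apply: contra nx => /eqP E.
by apply/eqP/ffunP => k; rewrite /x0 -E !ffunE addrK.
Qed.

Definition cnt (tau : {ffun 'I_N -> 'I_D}) : {ffun 'I_D -> 'I_N.+1} :=
  [ffun i => inord #|[set l | tau l == i]|].

Lemma cnt_card (tau tau' : {ffun 'I_N -> 'I_D}) i : cnt tau = cnt tau' ->
  #|[set l | tau l == i]| = #|[set l | tau' l == i]|.
Proof.
move=> /(congr1 (fun c : {ffun 'I_D -> 'I_N.+1} => nat_of_ord (c i))); rewrite !ffunE.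
have H (t : {ffun 'I_N -> 'I_D}) : (#|[set l | t l == i]| < N.+1)%N.
  by rewrite ltnS (leq_trans (max_card _)) // card_ord.
by rewrite !inordK.
Qed.

Lemma sum_cards (tau : {ffun 'I_N -> 'I_D}) : (\sum_i #|[set l | tau l == i]|)%N = N.
Proof.
under eq_bigr do rewrite card_predE.
rewrite exchange_big /= -[RHS]card_ord -sum1_card.
apply: eq_bigr => l _.
rewrite (bigD1 (tau l)) //= eqxx big1 // => i ni.
by rewrite eq_sym (negbTE ni).
Qed.

Definition TF (Fam : {ffun TVert d m -> {ffun 'I_N -> 'I_D}}) : {ffun L -> 'I_D} :=
  [ffun a => Fam a.1 a.2].

Lemma TF_inj : injective TF.
Proof.
move=> F F' E; apply/ffunP => x; apply/ffunP => l.
by have := congr1 (fun T : {ffun L -> 'I_D} => T (x, l)) E; rewrite !ffunE.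
Qed.

Lemma TF_adm (c : {ffun 'I_D -> 'I_N.+1}) (Fam : {ffun TVert d m -> {ffun 'I_N -> 'I_D}}) :
  (forall x, cnt (Fam x) = c) -> admissible d D m N f (TF Fam).
Proof.
move=> Hc y; rewrite card_predE.
have E1 (a : L) : (tshift f (TF Fam a) a.1 == y : nat) =
    (\sum_i ((Fam a.1 a.2 == i) * (tshift f i a.1 == y)))%N.
  rewrite (bigD1 (Fam a.1 a.2)) //= eqxx big1 ?ffunE ?addn0 ?mul1n // => i ni.
  by rewrite eq_sym (negbTE ni).
under eq_bigr do rewrite E1.
rewrite exchange_big /= -[RHS](sum_cards (Fam y)).
apply: eq_bigr => i _.
rewrite -(pair_big predT predT (fun x l => (Fam x l == i) * (tshift f i x == y)))%N /=.
under eq_bigr do rewrite -big_distrl /= -card_predE (cnt_card _ _ i (etrans (Hc _) (esym (Hc y)))).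
by rewrite -big_distrr /= tshift_one muln1.
Qed.

End Adm.

Arguments tp {d D m N}.
Arguments cnt {D N}.
Arguments TF {d D m N}.
Arguments count_le {d D m N f}.
Arguments count_ge {d D m N f}.

Section Weights.
Variables (R : realType) (d D m N : nat) (f : 'I_D -> 'I_d -> int) (u : 'I_D -> R).
Hypothesis hu : forall i, 0 < u i.
Local Notation L := (TVert d m * 'I_N)%type.
Local Notation MT := (Matching d D m N).
Local Notation V := #|TVert d m|.
Local Notation K T := #|[set M : MT | perfect f M & tp M == T]|.

Lemma Z_decomp : partition_fn f u m N =
  \sum_(T : {ffun L -> 'I_D}) (\prod_a u (T a)) * (K T)%:R.
Proof.
rewrite /partition_fn (partition_big (@tp d D m N) xpredT) //=.
apply: eq_bigr => T _.
rewrite (eq_bigr (fun _ => \prod_a u (T a))); last first.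
  move=> M /andP [_ /eqP E]; rewrite /mweight; apply: eq_bigr => a _.
  by rewrite -E ffunE.
rewrite (eq_bigl (fun M => M \in [set M : MT | perfect f M & tp M == T])); last first.
  by move=> M; rewrite inE.
by rewrite sumr_const mulr_natr.
Qed.

Lemma W_ge0 (T : {ffun L -> 'I_D}) : 0 <= \prod_a u (T a).
Proof. by apply: prodr_ge0 => a _; apply: ltW. Qed.

Lemma Z_upper : partition_fn f u m N <= (N`! ^ V)%:R * (\sum_i u i) ^+ (V * N).
Proof.
rewrite Z_decomp.
apply: (le_trans (y := \sum_(T : {ffun L -> 'I_D}) (\prod_a u (T a)) * (N`! ^ V)%:R)).
  apply: ler_sum => T _; apply: ler_wpM2l; first exact: W_ge0.
  by rewrite ler_nat count_le.
rewrite -big_distrl /= mulrC -(bigA_distr_bigA (fun (a : L) (i : 'I_D) => u i)) /= prodr_const.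
by rewrite card_prod card_ord.
Qed.

Definition G (c : {ffun 'I_D -> 'I_N.+1}) : R :=
  \sum_(tau : {ffun 'I_N -> 'I_D} | cnt tau == c) \prod_l u (tau l).

Lemma G_ge0 c : 0 <= G c.
Proof. by apply: sumr_ge0 => tau _; apply: prodr_ge0 => l _; apply: ltW. Qed.

Lemma Z_lower_c c : (N`! ^ V)%:R * (G c) ^+ V <= partition_fn f u m N.
Proof.
pose Fams := [set Fam : {ffun TVert d m -> {ffun 'I_N -> 'I_D}} | [forall x, cnt (Fam x) == c]].
pose Img := [set TF Fam | Fam in Fams].
rewrite Z_decomp.
apply: (le_trans (y := \sum_(T in Img) (\prod_a u (T a)) * (K T)%:R)); last first.
  rewrite [X in _ <= X](bigID (mem Img)) /= lerDl.
  by apply: sumr_ge0 => T _; apply: mulr_ge0; [exact: W_ge0 | exact: ler0n].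
apply: (le_trans (y := \sum_(T in Img) (\prod_a u (T a)) * (N`! ^ V)%:R)); last first.
  apply: ler_sum => T /imsetP [Fam]; rewrite inE => /forallP HF ->.
  apply: ler_wpM2l; first exact: W_ge0.
  rewrite ler_nat count_ge //; apply: (@TF_adm _ _ _ _ _ c) => x; exact/eqP.
rewrite -big_distrl /= [X in _ <= X]mulrC; apply: ler_wpM2l; first exact: ler0n.
rewrite big_imset /=; last by move=> F1 F2 _ _; apply: TF_inj.
have E : \sum_(Fam in Fams) \prod_(x : TVert d m) \prod_l u (Fam x l) = G c ^+ V.
  rewrite /G -prodr_const.
  rewrite (bigA_distr_big_dep (fun (_ : TVert d m) (tau : {ffun 'I_N -> 'I_D}) => cnt tau == c)
     (fun (_ : TVert d m) (tau : {ffun 'I_N -> 'I_D}) => \prod_l u (tau l))).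
  apply: eq_bigl => Fam.
  rewrite inE; apply/forallP/familyP => H x; exact: (H x).
rewrite -E le_eqVlt; apply/orP; left; apply/eqP.
apply: eq_bigr => Fam _.
rewrite (eq_bigr (fun a => u (Fam a.1 a.2))); last by move=> a _; rewrite ffunE.
by rewrite pair_big /=.
Qed.

Lemma G_max : exists c, (\sum_i u i) ^+ N / ((N.+1) ^ D)%:R <= G c.
Proof.
have c0 : {ffun 'I_D -> 'I_N.+1} := [ffun => ord0].
case: (@arg_maxP _ R _ c0 xpredT G isT) => cm _ Hcm.
exists cm.
rewrite ler_pdivrMr ?ltr0n ?expn_gt0 //.
have -> : (\sum_i u i) ^+ N = \sum_c G c.
  rewrite -[N in _ ^+ N]card_ord -prodr_const bigA_distr_bigA /=.
  by rewrite (partition_big (@cnt D N) xpredT).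
apply: (le_trans (y := \sum_(c : {ffun 'I_D -> 'I_N.+1}) G cm)).
  by apply: ler_sum => c _; apply: Hcm.
by rewrite sumr_const card_ffun !card_ord mulr_natr.
Qed.

Lemma Z_lower : (N`! ^ V)%:R * ((\sum_i u i) ^+ N / ((N.+1) ^ D)%:R) ^+ V
   <= partition_fn f u m N.
Proof.
have [c Hc] := G_max.
apply: le_trans (Z_lower_c c).
apply: ler_wpM2l; first exact: ler0n.
apply: lerXn2r => //; last exact: G_ge0.
rewrite nnegrE; apply: divr_ge0; last exact: ler0n.
by apply: exprn_ge0; apply: sumr_ge0 => i _; apply: ltW.
Qed.

End Weights.
Section Real.
Variable R : realType.

Lemma jensen_exp (I : finType) (P : pred I) (mu x : I -> R) (h : R) :
  (forall i, P i -> 0 <= mu i) -> \sum_(i | P i) mu i = 1 ->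
  expR (h * \sum_(i | P i) mu i * x i) <= \sum_(i | P i) mu i * expR (h * x i).
Proof.
move=> mu0 mu1; set E := \sum_(i | P i) mu i * x i.
have H i : P i -> mu i * (expR (h * E) * (1 + h * (x i - E))) <= mu i * expR (h * x i).
  move=> Pi; apply: ler_wpM2l; first exact: mu0.
  have -> : expR (h * x i) = expR (h * E) * expR (h * (x i - E)).
    by rewrite -expRD; congr expR; ring.
  by apply: ler_wpM2l; [exact: ltW (expR_gt0 _) | exact: expR_ge1Dx].
apply: le_trans (ler_sum _ H).
set c := expR (h * E).
rewrite (eq_bigr (fun i => c * mu i + (c * h) * (mu i * x i) - (c * h * E) * mu i)); last first.
  by move=> i _; ring.
rewrite sumrB big_split /= -!big_distrr /= mu1 -/E.
suff -> : c * 1 + c * h * E - c * h * E * 1 = c by [].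
ring.
Qed.

Lemma ln_prod (I : finType) (F : I -> R) : (forall i, 0 < F i) ->
  ln (\prod_i F i) = \sum_i ln (F i).
Proof.
move=> F0; apply: (@expR_inj R); rewrite expR_sum lnK; last first.
  by rewrite posrE; apply: prodr_gt0 => i _.
by apply: eq_bigr => i _; rewrite lnK // posrE.
Qed.

Lemma ln_le_sub1 (y : R) : 0 < y -> ln y <= y - 1.
Proof.
move=> y0; have := @le_ln1Dx R (y - 1); rewrite addrCA subrr addr0; apply.
lra.
Qed.

Lemma expR_le2 (x : R) : x <= 2^-1 -> expR x <= 1 + x + 2 * x ^+ 2.
Proof.
move=> hx.
have h1 : expR x * (1 - x) <= 1.
  have := expR_ge1Dx (- x); rewrite expRN => H.
  have ex := expR_gt0 x.
  rewrite -(ler_pM2r ex) in H.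
  by rewrite mulrC (le_trans H) // mulVf // gt_eqF.
have h2 : 1 <= (1 + x + 2 * x ^+ 2) * (1 - x) by nra.
have hp : 0 < 1 - x by lra.
by rewrite -(ler_pM2r hp) (le_trans h1 h2).
Qed.

End Real.
Section Ent.
Variables (R : realType) (d D m N : nat) (f : 'I_D -> 'I_d -> int) (w : 'I_D -> R).
Hypothesis hw : forall i, 0 < w i.
Hypothesis hD : (0 < D)%N.
Local Notation MT := (Matching d D m N).

Definition ws (s : R) (i : 'I_D) : R := expR (s * ln (w i)).
Definition cM (M : MT) : R := \sum_a ln (w (M a).1).
Definition Zs (s : R) : R := partition_fn f (ws s) m N.

Lemma ws_gt0 s i : 0 < ws s i.
Proof. exact: expR_gt0. Qed.

Lemma mweight_ws s M : mweight (ws s) M = expR (s * cM M).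
Proof. by rewrite /cM mulr_sumr expR_sum. Qed.

Lemma mweight_w M : mweight w M = expR (cM M).
Proof.
rewrite /cM expR_sum; apply: eq_bigr => a _; by rewrite lnK // posrE.
Qed.

Lemma Zs_E s : Zs s = \sum_(M : MT | perfect f M) expR (s * cM M).
Proof. by apply: eq_bigr => M _; rewrite mweight_ws. Qed.

Lemma Z1_E : partition_fn f w m N = Zs 1.
Proof. rewrite Zs_E; apply: eq_bigr => M _; by rewrite mweight_w mul1r. Qed.

Lemma sumws_gt0 s : 0 < \sum_i ws s i.
Proof.
rewrite (bigD1 (Ordinal hD)) //=; apply: ltr_wpDr; last exact: ws_gt0.
by apply: sumr_ge0 => i _; apply: ltW; apply: ws_gt0.
Qed.

Lemma Zs_gt0 s : 0 < Zs s.
Proof.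
apply: lt_le_trans (@Z_lower R d D m N f (ws s) (ws_gt0 s)).
apply: mulr_gt0; first by rewrite ltr0n expn_gt0 fact_gt0.
apply: exprn_gt0; apply: divr_gt0; last by rewrite ltr0n expn_gt0.
by apply: exprn_gt0; apply: sumws_gt0.
Qed.

Definition Eav : R := \sum_(M : MT | perfect f M) (expR (cM M) / Zs 1) * cM M.

Lemma entropy_E : entropy f w m N = ln (Zs 1) - Eav.
Proof.
have Z0 := Zs_gt0 1.
rewrite /entropy /boltzmann Z1_E.
have E1 : \sum_(M : MT | perfect f M) expR (cM M) / Zs 1 = 1.
  by rewrite -mulr_suml /= [X in X / _](_ : _ = Zs 1) ?divff ?gt_eqF // Zs_E;
     apply: eq_bigr => M _; rewrite mul1r.
rewrite (eq_bigr (fun M => expR (cM M) / Zs 1 * cM M - ln (Zs 1) * (expR (cM M) / Zs 1))).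
  by rewrite sumrB -mulr_sumr E1 mulr1 opprB.
move=> M _; rewrite mweight_w ln_div ?posrE ?expR_gt0 // expRK; ring.
Qed.

Lemma jensen_Z h : h * Eav <= ln (Zs (1 + h)) - ln (Zs 1).
Proof.
have Z0 := Zs_gt0 1.
have Zh := Zs_gt0 (1 + h).
have mu0 (M : MT) : perfect f M -> 0 <= expR (cM M) / Zs 1.
  by move=> _; apply: divr_ge0; [exact: ltW (expR_gt0 _) | exact: ltW].
have mu1 : \sum_(M : MT | perfect f M) expR (cM M) / Zs 1 = 1.
  by rewrite -mulr_suml /= [X in X / _](_ : _ = Zs 1) ?divff ?gt_eqF // Zs_E;
     apply: eq_bigr => M _; rewrite mul1r.
have J := @jensen_exp R _ _ _ cM h mu0 mu1.
rewrite -ln_div ?posrE // -(expRK (h * Eav)).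
rewrite ler_ln ?posrE ?expR_gt0 ?divr_gt0 //.
apply: (le_trans J); rewrite le_eqVlt; apply/orP; left; apply/eqP.
rewrite (Zs_E (1 + h)) mulr_suml; apply: eq_bigr => M _.
rewrite mulrDl mul1r expRD; field; by rewrite gt_eqF.
Qed.


Definition g (s : R) : R := ln (\sum_i ws s i).
Local Notation V := #|TVert d m|.

Lemma ln_natX (a k : nat) : (0 < a)%N -> ln ((a ^ k)%:R : R) = k%:R * ln (a%:R).
Proof. by move=> a0; rewrite natrX lnXn ?ltr0n // mulr_natl. Qed.

Lemma lnZ_up s : ln (Zs s) <= V%:R * ln (N`!)%:R + (V * N)%:R * g s.
Proof.
have H := @Z_upper R d D m N f (ws s) (ws_gt0 s).
have U0 := sumws_gt0 s.
have P1 : 0 < ((N`! ^ V)%:R : R) by rewrite ltr0n expn_gt0 fact_gt0.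
have P2 : 0 < (\sum_i ws s i) ^+ (V * N) by apply: exprn_gt0.
apply: (le_trans (y := ln ((N`! ^ V)%:R * (\sum_i ws s i) ^+ (V * N)))).
  by rewrite ler_ln ?posrE ?Zs_gt0 ?mulr_gt0.
rewrite lnM ?posrE // ln_natX ?fact_gt0 // lnXn // mulr_natl.
by rewrite /g !mulr_natl.
Qed.

Lemma lnZ_lo s : V%:R * ln (N`!)%:R + (V * N)%:R * g s - (V * D)%:R * ln (N.+1)%:R
  <= ln (Zs s).
Proof.
have H := @Z_lower R d D m N f (ws s) (ws_gt0 s).
have U0 := sumws_gt0 s.
have P1 : 0 < ((N`! ^ V)%:R : R) by rewrite ltr0n expn_gt0 fact_gt0.
have P3 : 0 < (((N.+1) ^ D)%:R : R) by rewrite ltr0n expn_gt0.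
have P2 : 0 < ((\sum_i ws s i) ^+ N / ((N.+1) ^ D)%:R) ^+ V.
  by apply: exprn_gt0; apply: divr_gt0 => //; apply: exprn_gt0.
apply: (le_trans (y := ln ((N`! ^ V)%:R * ((\sum_i ws s i) ^+ N / ((N.+1) ^ D)%:R) ^+ V))); last first.
  by rewrite ler_ln ?posrE ?Zs_gt0 ?mulr_gt0.
rewrite lnM ?posrE // ln_natX ?fact_gt0 // lnXn ?divr_gt0 ?exprn_gt0 //.
rewrite ln_div ?posrE ?exprn_gt0 // lnXn // ln_natX //.
by rewrite /g !mulr_natl mulrnBl -!mulrnA (mulnC _ N) (mulnC _ D) addrA.
Qed.

Definition Wt : R := \sum_i w i.
Definition Abar : R := \sum_i (w i / Wt) * ln (w i).
Definition Qt : R := \sum_i (w i / Wt) * ln (w i) ^+ 2.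

Lemma Wt_gt0 : 0 < Wt.
Proof.
rewrite /Wt (bigD1 (Ordinal hD)) //=; apply: ltr_wpDr; last exact: hw.
by apply: sumr_ge0 => i _; apply: ltW.
Qed.

Lemma Qt_ge0 : 0 <= Qt.
Proof.
apply: sumr_ge0 => i _; apply: mulr_ge0; last exact: sqr_ge0.
by apply: divr_ge0; apply: ltW; [exact: hw | exact: Wt_gt0].
Qed.

Lemma ws1 i : ws 1 i = w i.
Proof. by rewrite /ws mul1r lnK // posrE. Qed.

Lemma g1E : g 1 = ln Wt.
Proof. by rewrite /g /Wt; congr ln; apply: eq_bigr => i _; rewrite ws1. Qed.

Lemma g_step t : (forall i, t * ln (w i) <= 2^-1) ->
  g (1 + t) - g 1 <= t * Abar + 2 * t ^+ 2 * Qt.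
Proof.
move=> ht.
have W0 := Wt_gt0.
have U0 := sumws_gt0 (1 + t).
rewrite g1E /g -ln_div ?posrE //.
apply: le_trans (@ln_le_sub1 R _ (divr_gt0 U0 W0)) _.
have p1 : \sum_i w i / Wt = 1 by rewrite -mulr_suml divff // gt_eqF.
have -> : (\sum_i ws (1 + t) i) / Wt - 1 = \sum_i (w i / Wt) * (expR (t * ln (w i)) - 1).
  rewrite -[X in _ - X]p1 mulr_suml -sumrB; apply: eq_bigr => i _.
  rewrite /ws mulrDl mul1r expRD lnK ?posrE //; ring.
have -> : t * Abar + 2 * t ^+ 2 * Qt =
    \sum_i (w i / Wt) * (t * ln (w i) + 2 * (t * ln (w i)) ^+ 2).
  rewrite /Abar /Qt !mulr_sumr -big_split /=; apply: eq_bigr => i _; ring.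
apply: ler_sum => i _; apply: ler_wpM2l.
  by apply: divr_ge0; apply: ltW.
have := @expR_le2 R _ (ht i); lra.
Qed.

Lemma V_E : (#|TVert d m| = m.+1 ^ d)%N.
Proof. by rewrite card_ffun !card_ord. Qed.

Lemma ne_bound (h : R) : 0 < h -> h <= 1 -> (forall i, h * `|ln (w i)| <= 2^-1) -> (0 < N)%N ->
  `|(ln Wt - Abar) - normalized_entropy f w m N| <=
     2 * h * Qt + 2 * (D%:R * ln (N.+1)%:R / (N%:R * h)).
Proof.
move=> h0 h1 hh N0.
have hp i : h * ln (w i) <= 2^-1.
  have := hh i; have := ler_norm (ln (w i)); have := normr_ge0 (ln (w i)); nra.
have hm i : - h * ln (w i) <= 2^-1.
  have := hh i; have := ler_norm (- ln (w i)); rewrite normrN; nra.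
have gp := g_step _ hp.
have gm := g_step _ hm.
have eH := entropy_E.
have j1 := jensen_Z h.
have j2 := jensen_Z (- h).
have u1 := lnZ_up 1.
have l1 := lnZ_lo 1.
have up := lnZ_up (1 + h).
have um := lnZ_up (1 + - h).
rewrite g1E in gp gm u1 l1.
rewrite /normalized_entropy -V_E eH.
move: u1 l1 up um j1 j2 gp gm; rewrite !natrM.
set V_ := (#|TVert d m|%:R : R); set Nr := (N%:R : R); set Dr := (D%:R : R).
set lam := ln (N.+1)%:R; set lF := ln (N`!)%:R; set Z1l := ln (Zs 1).
set Zpl := ln (Zs (1 + h)); set Zml := ln (Zs (1 - h)).
set gpv := g (1 + h); set gmv := g (1 - h); set g1 := ln Wt.
move=> u1 l1 up um j1 j2 gp gm.
have V0 : 0 < V_ by rewrite ltr0n V_E expn_gt0.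
have Nr0 : 0 < Nr by rewrite ltr0n.
have Dr0 : 0 <= Dr by rewrite ler0n.
have lam0 : 0 <= lam by apply: ln_ge0; rewrite ler1n.
have Q0 := Qt_ge0.
set A := Nr * V_.
have A0 : 0 < A by apply: mulr_gt0.
set X := (Z1l - Eav - V_ * lF) / (V_ * Nr).
have EX : Z1l - Eav - V_ * lF = X * A.
  by rewrite /X /A; field; rewrite ?mulf_neq0 ?gt_eqF.
set gam := Dr * lam / (Nr * h).
have gam0 : 0 <= gam by apply: divr_ge0; [apply: mulr_ge0 | apply: ltW; apply: mulr_gt0].
have Eg : V_ * Dr * lam = A * h * gam.
  by rewrite /gam /A; field; rewrite ?mulf_neq0 ?gt_eqF.
have gpA : A * gpv <= A * g1 + A * (h * Abar + 2 * h ^+ 2 * Qt).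
  by rewrite -mulrDr ler_wpM2l ?(ltW A0) //; lra.
have gmA : A * gmv <= A * g1 + A * (- h * Abar + 2 * (- h) ^+ 2 * Qt).
  by rewrite -mulrDr ler_wpM2l ?(ltW A0) //; lra.
have l1p : (1 + h) * (V_ * lF + Nr * V_ * g1 - V_ * Dr * lam) <= (1 + h) * Z1l.
  by rewrite ler_wpM2l //; lra.
have l1m : (1 - h) * (V_ * lF + Nr * V_ * g1 - V_ * Dr * lam) <= (1 - h) * Z1l.
  by rewrite ler_wpM2l //; lra.
rewrite Eg in l1p l1m.
have Ah0 : 0 < A * h by apply: mulr_gt0.
have K1 : (A * h) * X <= (A * h) * (g1 - Abar + 2 * h * Qt + gam).
  have : h * (X * A) <= A * (h * (g1 - Abar) + 2 * h ^+ 2 * Qt) + A * h * gam.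
    rewrite -EX.
    have : (- h) * Eav <= Zml - Z1l := j2.
    rewrite /A in gmA l1m *.
    have : 0 <= h * (Nr * V_ * h * gam).
      by apply: mulr_ge0; [exact: ltW | apply: mulr_ge0 => //; apply: mulr_ge0; [exact: ltW (mulr_gt0 Nr0 V0)| exact: ltW]].
    lra.
  rewrite /A; nra.
have K2 : (A * h) * (g1 - Abar - 2 * h * Qt - 2 * gam) <= (A * h) * X.
  have : A * (h * (g1 - Abar) - 2 * h ^+ 2 * Qt) - (1 + h) * (A * h * gam) <= h * (X * A).
    rewrite -EX.
    rewrite /A in gpA l1p *.
    lra.
  have : 0 <= (1 - h) * (Nr * V_ * h * gam).
    apply: mulr_ge0; first lra.
    by apply: mulr_ge0 => //; apply: mulr_ge0; [exact: ltW (mulr_gt0 Nr0 V0)| exact: ltW].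
  rewrite /A; lra.
rewrite ler_pM2l // in K1; rewrite ler_pM2l // in K2.
have -> : (Z1l - Eav - V_ * lF) / A = X by rewrite /X /A [Nr * V_]mulrC.
rewrite ler_norml; apply/andP; split; lra.
Qed.


End Ent.

Arguments Wt {R D}.
Arguments Abar {R D}.
Arguments Qt {R D}.
Arguments Qt_ge0 {R D w}.
Arguments ne_bound {R d D m N f w} hw hD {h}.

Local Open Scope classical_set_scope.
Local Open Scope ring_scope.

Section Main.
Variables (R : realType) (d D : nat) (f : 'I_D -> 'I_d -> int) (w : 'I_D -> R).
Hypothesis hw : forall i, 0 < w i.
Hypothesis hD : (0 < D)%N.

Lemma Abar_E : Abar w = (\sum_(i < D) w i)^-1 * \sum_(i < D) w i * ln (w i).
Proof. rewrite /Abar /Wt mulr_sumr; apply: eq_bigr => i _; rewrite /=; ring. Qed.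

Lemma lam_bound (N : nat) : ln ((N.+1)%:R : R) ^+ 2 <= 2 * N%:R.
Proof.
have l0 : 0 <= ln ((N.+1)%:R : R) by apply: ln_ge0; rewrite ler1n.
have := expR_ge1Dxn 1 l0; rewrite lnK ?posrE ?ltr0n // => H.
have F : ((1.+1)`!%:R : R) = 2 by [].
set l := ln _ in l0 H *; have E : ((N.+1)%:R : R) = N%:R + 1 by rewrite -addn1 natrD.
rewrite F E in H; lra.
Qed.

Lemma conv_m m : (fun N => normalized_entropy f w m N) @ \oo --> ln (Wt w) - Abar w.
Proof.
apply/cvgrPdist_le => e e0.
set Amax := 1 + \sum_i `|ln (w i)|.
have Amax1 : 1 <= Amax.
  by rewrite /Amax lerDl; apply: sumr_ge0 => i _; apply: normr_ge0.
have Ai i : `|ln (w i)| <= Amax.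
  rewrite /Amax (bigD1 i) //=.
  have : 0 <= \sum_(j | j != i) `|ln (w j)| by apply: sumr_ge0 => j _; apply: normr_ge0.
  lra.
have Q0 := Qt_ge0 hw hD.
set h := Num.min (2^-1 / Amax) (e / (8 * (Qt w + 1))).
have hA : h <= 2^-1 / Amax by rewrite /h ge_min lexx.
have hQ : h <= e / (8 * (Qt w + 1)) by rewrite /h ge_min lexx orbT.
have h0 : 0 < h.
  rewrite /h lt_min; apply/andP; split; apply: divr_gt0 => //; try lra.
have h1 : h <= 1.
  apply: (le_trans hA); rewrite ler_pdivrMr; lra.
have hh i : h * `|ln (w i)| <= 2^-1.
  have := Ai i; have := normr_ge0 (ln (w i)).
  rewrite ler_pdivlMr in hA; last lra.
  nra.
have hQ' : 2 * h * Qt w <= e / 4.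
  rewrite ler_pdivlMr in hQ; last lra.
  nra.
set Cc := 2 * D%:R / h.
have Cc0 : 0 <= Cc by apply: divr_ge0; [apply: mulr_ge0 => //; exact: ler0n | exact: ltW].
have [N0 HN0] : exists N0 : nat, 8 * Cc ^+ 2 / e ^+ 2 + 1 < N0%:R.
  by eexists; apply: truncnS_gt.
apply: filterS (nbhs_infty_ge N0) => N hN.
have NN0 : N0%:R <= (N%:R : R) by rewrite ler_nat.
have Npos : (0 < N)%N.
  have q : 0 <= 8 * Cc ^+ 2 / e ^+ 2.
    by apply: divr_ge0; [apply: mulr_ge0 => //; apply: sqr_ge0 | apply: sqr_ge0].
  rewrite -(ltr0n R); lra.
have Nr0 : 0 < (N%:R : R) by rewrite ltr0n.
have lb := lam_bound N.
set lam := ln ((N.+1)%:R : R) in lb *.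
have lam0 : 0 <= lam by apply: ln_ge0; rewrite ler1n.
have key : Cc * lam <= e / 2 * N%:R.
  have e2 : 8 * Cc ^+ 2 <= e ^+ 2 * N%:R.
    have : 8 * Cc ^+ 2 / e ^+ 2 <= N%:R by lra.
    rewrite ler_pdivrMr ?exprn_gt0 //; lra.
  have s1 : Cc ^+ 2 * lam ^+ 2 <= Cc ^+ 2 * (2 * N%:R) by apply: ler_wpM2l => //; apply: sqr_ge0.
  have s2 : 8 * Cc ^+ 2 * N%:R <= e ^+ 2 * N%:R * N%:R by apply: ler_wpM2r => //; apply: ltW.
  have sq : (Cc * lam) ^+ 2 <= (e / 2 * N%:R) ^+ 2.
    rewrite !expr2; move: s1 s2; rewrite !expr2; lra.
  rewrite -ler_sqr ?nnegrE //; [apply: mulr_ge0 => // | apply: mulr_ge0; [lra | exact: ltW]].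
have B := @ne_bound R d D m N f w hw hD h h0 h1 hh Npos.
rewrite /=.
apply: (le_trans B).
have -> : 2 * (D%:R * lam / (N%:R * h)) = Cc * lam / N%:R.
  by rewrite /Cc; field; rewrite ?gt_eqF.
have : Cc * lam / N%:R <= e / 2 by rewrite ler_pdivrMr //.
lra.
Qed.

End Main.

Theorem mainTheorem2 (R : realType) (d D : nat) (v0 : 'I_d -> R)
    (f : 'I_D -> 'I_d -> int) (w : 'I_D -> R) :
  spans_Rd (evec v0 f) ->
  sum_zero (evec v0 f) ->
  Lconnected f ->
  (forall i, 0 < w i) ->
  exists L : nat -> R,
    (forall m : nat, (fun N => normalized_entropy f w m N) @ \oo --> L m) /\
    (L @ \oo --> ln (\sum_(i < D) w i)
                 - (\sum_(i < D) w i)^-1 * \sum_(i < D) w i * ln (w i)).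
Proof.
move=> _ _ HL hw.
have hD : (0 < D)%N.
  have H := HL (true, [ffun => 0%:Z]) (false, [ffun => 0%:Z]).
  inversion H as [| u v x [i _] _].
  exact: (leq_ltn_trans (leq0n _) (ltn_ord i)).
exists (fun _ => ln (Wt w) - Abar w); split.
  by move=> m; apply: conv_m.
by rewrite -Abar_E; apply: cvg_cst.
Qed.
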